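(* Let $\ell$ and $m$ be positive integers with $\ell\le m$, let $G$ be a group written additively, and let $\mathbf{a}=(a_1,\dots,a_m)$ be a sequence of elements of $G$. Then at least one of the following holds: (1) $|\Sigma^{\ell}(\mathbf{a})|\ge\min(p(G),\ m-\ell+1)$; (2) there exists $i\in[1,m]$ such that $\ell a_i\in\Sigma^{\ell}(\mathbf{a})$.
   Context: $p(G)$ is the order of the smallest nontrivial subgroup of $G$, or $\infty$ if no such subgroup exists. $\ell a_i$ denotes $a_i+\cdots+a_i$ ($\ell$ times). $\Sigma^{\ell}(\mathbf{a})$ is the set of all elements $a_{i_1}+\cdots+a_{i_\ell}$ with $i_1,\dots,i_\ell\in[1,m]$ pairwise distinct, taken in any order. *)

(* Defs.v *)
From Stdlib Require Import Arith List ClassicalEpsilon.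
Import ListNotations.

Record is_group {G : Type} (add : G -> G -> G) (zero : G) (opp : G -> G) : Prop :=
  { grp_assoc : forall x y z, add x (add y z) = add (add x y) z;
    grp_zero_l : forall x, add zero x = x;
    grp_opp_l : forall x, add (opp x) x = zero }.

Section Defs.
Context {G : Type} (add : G -> G -> G) (zero : G) (opp : G -> G).

Definition is_subgroup (H : G -> Prop) : Prop :=
  H zero /\ (forall x y, H x -> H y -> H (add x y)) /\ (forall x, H x -> H (opp x)).

Definition has_card (H : G -> Prop) (n : nat) : Prop :=
  exists xs : list G, NoDup xs /\ length xs = n /\ (forall x, H x <-> In x xs).

Definition has_nontriv_subgroup_of_order (n : nat) : Prop :=
  exists H : G -> Prop, is_subgroup H /\ (exists x, H x /\ x <> zero) /\ has_card H n.

(* specification of p(G): Some p = the order of the smallest nontrivial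
   subgroup, None = infinity (no nontrivial finite subgroup exists) *)
Definition is_pG (p : option nat) : Prop :=
  match p with
  | None => ~ exists n, has_nontriv_subgroup_of_order n
  | Some q => has_nontriv_subgroup_of_order q /\
              forall n, has_nontriv_subgroup_of_order n -> q <= n
  end.

Definition pG : option nat := epsilon (inhabits None) is_pG.

Definition min_pG (k : nat) : nat :=
  match pG with Some q => Nat.min q k | None => k end.

Definition gsum (xs : list G) : G := fold_right add zero xs.

Definition gmul (l : nat) (x : G) : G := gsum (repeat x l).

(* Sigma^l(a) for a = (a_0, ..., a_{m-1}) (0-based indices): sums of l terms
   with pairwise distinct indices, taken in any order *)
Definition Sigma (m l : nat) (a : nat -> G) (x : G) : Prop :=
  exists idx : list nat, length idx = l /\ NoDup idx /\
    (forall i, In i idx -> i < m) /\ x = gsum (map a idx).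

Definition card_ge (S : G -> Prop) (k : nat) : Prop :=
  exists xs : list G, NoDup xs /\ length xs = k /\ (forall x, In x xs -> S x).

End Defs.

(* Main.v *)
Require Import Defs.
From Stdlib Require Import Arith List.
From Stdlib Require Import Lia ClassicalEpsilon Classical Wf_nat.
Import ListNotations.

Section K.
Context {G : Type} (add : G -> G -> G) (zero : G) (opp : G -> G)
  (hG : is_group add zero opp).
Local Infix "*" := add.

Lemma g_assoc x y z : x * (y * z) = (x * y) * z. Proof. apply hG. Qed.
Lemma g_zl x : zero * x = x. Proof. apply hG. Qed.
Lemma g_ol x : opp x * x = zero. Proof. apply hG. Qed.
Lemma g_or x : x * opp x = zero.
Proof.
  rewrite <- (g_zl (x * opp x)). rewrite <- (g_ol (opp x)) at 1.
  rewrite <- g_assoc. rewrite (g_assoc (opp x) x (opp x)). rewrite g_ol, g_zl.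
  apply g_ol.
Qed.
Lemma g_zr x : x * zero = x.
Proof. rewrite <- (g_ol x), g_assoc, g_or, g_zl. reflexivity. Qed.
Lemma g_cl x y z : x * y = x * z -> y = z.
Proof. intro H. rewrite <- (g_zl y), <- (g_zl z), <- (g_ol x), <- !g_assoc, H. reflexivity. Qed.
Lemma g_cr x y z : y * x = z * x -> y = z.
Proof. intro H. rewrite <- (g_zr y), <- (g_zr z), <- (g_or x), !g_assoc, H. reflexivity. Qed.
Lemma g_inv_uniq x y : x * y = zero -> y = opp x.
Proof. intro H. apply (g_cl x). rewrite H, g_or. reflexivity. Qed.

Definition dec (x y : G) : {x = y} + {x <> y} := excluded_middle_informative (x = y).
Definition inb (x : G) (l : list G) : bool := if in_dec dec x l then true else false.
Lemma inb_true x l : inb x l = true <-> In x l.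
Proof. unfold inb; destruct (in_dec dec x l); split; congruence || tauto. Qed.
Lemma inb_false x l : inb x l = false <-> ~ In x l.
Proof. unfold inb; destruct (in_dec dec x l); split; congruence || tauto. Qed.

Definition card (l : list G) := length (nodup dec l).
Lemma card_incl l l' : incl l l' -> card l <= card l'.
Proof.
  intro H. unfold card. apply NoDup_incl_length. apply NoDup_nodup.
  intros x Hx. apply nodup_In. apply H. apply nodup_In in Hx. exact Hx.
Qed.
Lemma card_ge_nodup L l : NoDup L -> incl L l -> length L <= card l.
Proof.
  intros H1 H2. unfold card. apply NoDup_incl_length; auto.
  intros x Hx. apply nodup_In. auto.
Qed.

Definition prodl (X Y : list G) : list G := flat_map (fun x => map (fun y => x * y) Y) X.
Lemma prodl_In z X Y : In z (prodl X Y) <-> exists x y, In x X /\ In y Y /\ z = x * y.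
Proof.
  unfold prodl. rewrite in_flat_map. split.
  - intros [x [Hx Hz]]. apply in_map_iff in Hz. destruct Hz as [y [Hy1 Hy2]]. eauto.
  - intros [x [y [Hx [Hy ->]]]]. exists x. split; auto. apply in_map. auto.
Qed.

Lemma map_nodup_inj {A B : Type} (f : A -> B) (l : list A) :
  (forall x y, In x l -> In y l -> f x = f y -> x = y) -> NoDup l -> NoDup (map f l).
Proof. intros H1 H2. apply NoDup_map_NoDup_ForallPairs; auto. Qed.

Lemma nodup_map_l x Y : NoDup Y -> NoDup (map (fun y => x * y) Y).
Proof. intro H. apply map_nodup_inj; auto. intros a b _ _. apply g_cl. Qed.
Lemma nodup_map_r x Y : NoDup Y -> NoDup (map (fun y => y * x) Y).
Proof. intro H. apply map_nodup_inj; auto. intros a b _ _. apply g_cr. Qed.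

Lemma card_prod_ge_r X Y x : In x X -> NoDup Y -> length Y <= card (prodl X Y).
Proof.
  intros Hx HY. rewrite <- (length_map (fun y => x * y) Y).
  apply card_ge_nodup. apply nodup_map_l; auto.
  intros z Hz. apply in_map_iff in Hz. destruct Hz as [y [<- Hy]].
  apply prodl_In. eauto.
Qed.
Lemma card_prod_ge_l X Y y : In y Y -> NoDup X -> length X <= card (prodl X Y).
Proof.
  intros Hy HX. rewrite <- (length_map (fun x => x * y) X).
  apply card_ge_nodup. apply nodup_map_r; auto.
  intros z Hz. apply in_map_iff in Hz. destruct Hz as [x [<- Hx]].
  apply prodl_In. eauto.
Qed.

Fixpoint pw (e : G) (k : nat) : G := match k with 0 => zero | S k => e * pw e k end.
Lemma pw_add e i j : pw e (i + j) = pw e i * pw e j.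
Proof. induction i; simpl. - rewrite g_zl; auto. - rewrite IHi, g_assoc; auto. Qed.
Lemma pw_mul e d i : pw e d = zero -> pw e (d * i) = zero.
Proof.
  intro H. induction i. - rewrite Nat.mul_0_r; auto.
  - rewrite Nat.mul_succ_r, pw_add, IHi, H, g_zl; auto.
Qed.
Lemma pw_mod e d k : pw e d = zero -> 0 < d -> pw e k = pw e (k mod d).
Proof.
  intros H Hd. rewrite (Nat.div_mod_eq k d) at 1. rewrite pw_add, pw_mul, g_zl; auto.
Qed.

Definition subgroup n := has_nontriv_subgroup_of_order add zero opp n.

Lemma cyc_sub e Y y0 : e <> zero -> NoDup Y -> In y0 Y ->
  (forall y, In y Y -> In (e * y) Y) -> exists n, subgroup n /\ n <= length Y.
Proof.
  intros He HY Hy0 Hst.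
  assert (Hk : forall k, In (pw e k * y0) Y).
  { induction k; simpl. - rewrite g_zl; auto. - rewrite <- g_assoc. auto. }
  assert (Hij : exists i j, i < j /\ j <= length Y /\ pw e i * y0 = pw e j * y0).
  { apply NNPP. intro Hn.
    assert (Hnd : NoDup (map (fun k => pw e k * y0) (seq 0 (S (length Y))))).
    { apply map_nodup_inj; [|apply seq_NoDup].
      intros x y Hx Hy Hxy. apply in_seq in Hx, Hy.
      destruct (lt_eq_lt_dec x y) as [[Hl|Hl]|Hl]; auto; exfalso; apply Hn.
      - exists x, y. repeat split; auto; lia.
      - exists y, x. repeat split; auto; lia. }
    apply NoDup_incl_length with (l' := Y) in Hnd.
    - rewrite length_map, length_seq in Hnd. lia.
    - intros z Hz. apply in_map_iff in Hz. destruct Hz as [k [<- _]]. auto. }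
  destruct Hij as [i [j [Hij [HjY Heq]]]].
  set (d := j - i).
  assert (Hd : pw e d = zero).
  { apply g_cr in Heq. replace j with (d + i) in Heq by lia.
    rewrite pw_add in Heq. rewrite <- (g_zl (pw e i)) in Heq at 1. apply g_cr in Heq. auto. }
  assert (Hd0 : 0 < d) by lia.
  set (L := nodup dec (map (pw e) (seq 0 d))).
  exists (length L). split.
  - exists (fun x => exists k, x = pw e k). split; [|split].
    + split; [|split].
      * exists 0. reflexivity.
      * intros x y [k1 ->] [k2 ->]. exists (k1 + k2). rewrite pw_add; auto.
      * intros x [k ->]. exists (Nat.mul (d - 1) k). symmetry. apply g_inv_uniq.
        rewrite <- pw_add. replace (k + Nat.mul (d - 1) k)%nat with (Nat.mul d k) by nia. apply pw_mul; auto.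
    + exists e. split. * exists 1. simpl. rewrite g_zr; auto. * auto.
    + exists L. split; [apply NoDup_nodup|split; auto].
      intro x. unfold L. rewrite nodup_In. split.
      * intros [k ->]. rewrite (pw_mod e d k); auto. apply in_map. apply in_seq.
        pose proof (Nat.mod_upper_bound k d). lia.
      * intro Hx. apply in_map_iff in Hx. destruct Hx as [k [<- _]]. eauto.
  - rewrite <- (length_map (fun x => x * y0) L). apply NoDup_incl_length.
    + apply nodup_map_r. apply NoDup_nodup.
    + intros z Hz. apply in_map_iff in Hz. destruct Hz as [x [<- Hx]].
      unfold L in Hx. apply nodup_In, in_map_iff in Hx. destruct Hx as [k [<- _]]. auto.
Qed.

Lemma filter_compl {A : Type} (f : A -> bool) l :
  length (filter f l) + length (filter (fun x => negb (f x)) l) = length l.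
Proof. induction l; simpl; auto. destruct (f a); simpl; lia. Qed.

Lemma length_pos {A : Type} (l : list A) x : In x l -> 0 < length l.
Proof. destruct l; simpl; [tauto|lia]. Qed.

Lemma kemp_step X Y X' Y' : incl (prodl X' Y') (prodl X Y) ->
  length X + length Y <= length X' + length Y' ->
  ((forall n, subgroup n -> card (prodl X' Y') < n) -> length X' + length Y' - 1 <= card (prodl X' Y')) ->
  (forall n, subgroup n -> card (prodl X Y) < n) -> length X + length Y - 1 <= card (prodl X Y).
Proof.
  intros Hi Hs H NS. pose proof (card_incl _ _ Hi).
  assert (length X' + length Y' - 1 <= card (prodl X' Y')).
  { apply H. intros n Hn. specialize (NS n Hn). lia. }
  lia.
Qed.

Lemma kemp_aux N : forall k X Y,
  2 * card (prodl X Y) - (length X + length Y) <= N -> length Y <= k ->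
  NoDup X -> NoDup Y -> X <> [] -> Y <> [] ->
  (forall n, subgroup n -> card (prodl X Y) < n) ->
  length X + length Y - 1 <= card (prodl X Y).
Proof.
  induction N as [N IHN] using (well_founded_induction lt_wf).
  intro k; induction k as [|k IHk]; intros X Y HN Hk HX HY HX0 HY0 NS.
  { destruct Y; [congruence|simpl in Hk; lia]. }
  destruct X as [|x0 X']; [congruence|]. destruct Y as [|y0 Y']; [congruence|].
  set (X := x0 :: X') in *. set (Y := y0 :: Y') in *.
  assert (HcX : length X <= card (prodl X Y)) by (apply (card_prod_ge_l _ _ y0); simpl; auto).
  assert (HcY : length Y <= card (prodl X Y)) by (apply (card_prod_ge_r _ _ x0); simpl; auto).
  destruct (classic (exists x1 x2 y1 y2, In x1 X /\ In x2 X /\ In y1 Y /\ In y2 Y /\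
     x1 <> x2 /\ x1 * y1 = x2 * y2)) as [Hc|Hc].
  2:{
    set (L := map (fun y => x0 * y) Y ++ map (fun x => x * y0) X').
    assert (HL : NoDup L).
    { apply NoDup_app.
      - apply nodup_map_l; auto.
      - apply nodup_map_r. inversion HX; auto.
      - intros z Hz1 Hz2. apply in_map_iff in Hz1, Hz2.
        destruct Hz1 as [y [<- Hy]]. destruct Hz2 as [x [Hxy Hx]].
        apply Hc. exists x0, x, y, y0. inversion HX; subst.
        repeat split; simpl; auto. intro; subst; contradiction. }
    assert (length L <= card (prodl X Y)).
    { apply card_ge_nodup; auto. intros z Hz. apply in_app_or in Hz.
      apply prodl_In. destruct Hz as [Hz|Hz]; apply in_map_iff in Hz.
      - destruct Hz as [y [<- Hy]]. exists x0, y. simpl; auto.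
      - destruct Hz as [x [<- Hx]]. exists x, y0. simpl; auto. }
    unfold L in H. rewrite length_app, !length_map in H. simpl in H |- *. lia. }
  destruct Hc as [x1 [x2 [y1 [y2 [Hx1 [Hx2 [Hy1 [Hy2 [Hne Heq]]]]]]]]].
  set (e := opp x1 * x2).
  assert (Hxe : x1 * e = x2) by (unfold e; rewrite g_assoc, g_or, g_zl; auto).
  assert (Hye : e * y2 = y1).
  { apply (g_cl x1). rewrite g_assoc, Hxe. auto. }
  assert (He0 : e <> zero).
  { intro H0. rewrite H0, g_zr in Hxe. auto. }
  set (f := fun x => inb (x * e) X). set (g := fun y => inb (e * y) Y).
  pose proof (filter_compl f X) as Hfa. pose proof (filter_compl g Y) as Hgb.
  destruct (le_lt_dec (length Y + length (filter f X)) (length X + length (filter g Y))) as [Hcase|Hcase].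
  -
    set (X1 := X ++ map (fun x => x * e) (filter (fun x => negb (f x)) X)).
    set (Y1 := filter g Y).
    assert (HY1 : length Y1 <= k).
    { destruct (classic (forall y, In y Y -> In (e * y) Y)) as [Hall|Hall].
      - exfalso. destruct (cyc_sub e Y y0 He0 HY) as [n [Hn Hnl]]; simpl; auto.
        specialize (NS n Hn). lia.
      - apply not_all_ex_not in Hall. destruct Hall as [y Hy].
        apply imply_to_and in Hy. destruct Hy as [Hy Hey].
        assert (0 < length (filter (fun x => negb (g x)) Y)).
        { apply (length_pos _ y). apply filter_In. split; auto. unfold g.
          destruct (inb (e * y) Y) eqn:E; auto. apply inb_true in E. contradiction. }
        unfold Y1. lia. }
    assert (Hinc : incl (prodl X1 Y1) (prodl X Y)).
    { intros z Hz. apply prodl_In in Hz. destruct Hz as [x [y [Hx [Hy ->]]]].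
      unfold Y1 in Hy. apply filter_In in Hy. destruct Hy as [Hy Hgy]. unfold g in Hgy.
      apply inb_true in Hgy. apply prodl_In. unfold X1 in Hx. apply in_app_or in Hx.
      destruct Hx as [Hx|Hx].
      * exists x, y. auto.
      * apply in_map_iff in Hx. destruct Hx as [x' [<- Hx']]. apply filter_In in Hx'.
        exists x', (e * y). repeat split; try tauto. symmetry. apply g_assoc. }
    assert (HX1 : NoDup X1).
    { apply NoDup_app; auto.
      - apply nodup_map_r. apply NoDup_filter; auto.
      - intros z Hz1 Hz2. apply in_map_iff in Hz2. destruct Hz2 as [x [<- Hx]].
        apply filter_In in Hx. destruct Hx as [_ Hx]. unfold f in Hx.
        destruct (inb (x * e) X) eqn:E; [discriminate|]. apply inb_false in E. auto. }
    assert (Hy2' : In y2 Y1).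
    { unfold Y1. apply filter_In. split; auto. unfold g. apply inb_true. rewrite Hye. auto. }
    assert (Hs : length X1 + length Y1 >= length X + length Y).
    { unfold X1, Y1. rewrite length_app, length_map. lia. }
    apply (kemp_step X Y X1 Y1); auto.
    intro NS'. apply (IHk X1 Y1); auto.
    * pose proof (card_incl _ _ Hinc).
      pose proof (card_prod_ge_l X1 Y1 y2 Hy2' HX1). lia.
    * apply NoDup_filter; auto.
    * unfold X1. destruct X; simpl; congruence.
    * destruct Y1; simpl in *; [contradiction|congruence].
  -
    set (X2 := filter f X).
    set (Y2 := Y ++ map (fun y => e * y) (filter (fun y => negb (g y)) Y)).
    assert (Hinc : incl (prodl X2 Y2) (prodl X Y)).
    { intros z Hz. apply prodl_In in Hz. destruct Hz as [x [y [Hx [Hy ->]]]].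
      unfold X2 in Hx. apply filter_In in Hx. destruct Hx as [Hx Hfx]. unfold f in Hfx.
      apply inb_true in Hfx. apply prodl_In. unfold Y2 in Hy. apply in_app_or in Hy.
      destruct Hy as [Hy|Hy].
      * exists x, y. auto.
      * apply in_map_iff in Hy. destruct Hy as [y' [<- Hy']]. apply filter_In in Hy'.
        exists (x * e), y'. repeat split; try tauto. apply g_assoc. }
    assert (HY2 : NoDup Y2).
    { apply NoDup_app; auto.
      - apply nodup_map_l. apply NoDup_filter; auto.
      - intros z Hz1 Hz2. apply in_map_iff in Hz2. destruct Hz2 as [y [<- Hy]].
        apply filter_In in Hy. destruct Hy as [_ Hy]. unfold g in Hy.
        destruct (inb (e * y) Y) eqn:E; [discriminate|]. apply inb_false in E. auto. }
    assert (Hx1' : In x1 X2).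
    { unfold X2. apply filter_In. split; auto. unfold f. apply inb_true. rewrite Hxe. auto. }
    assert (Hs : length X2 + length Y2 > length X + length Y).
    { unfold X2, Y2. rewrite length_app, length_map. lia. }
    apply (kemp_step X Y X2 Y2); try lia; auto.
    intro NS'.
    pose proof (card_incl _ _ Hinc).
    assert (HX20 : X2 <> []) by (destruct X2; simpl in *; [contradiction|congruence]).
    assert (HY20 : Y2 <> []) by (unfold Y2; destruct Y; simpl; congruence).
    pose proof (card_prod_ge_l X2 Y2 y0 ltac:(unfold Y2; simpl; auto) (NoDup_filter _ HX)).
    pose proof (card_prod_ge_r X2 Y2 x1 Hx1' HY2).
    apply (IHN (2 * card (prodl X2 Y2) - (length X2 + length Y2))) with (k := length Y2); auto.
    + lia.
    + apply NoDup_filter; auto.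
Qed.

Lemma kemp X Y : NoDup X -> NoDup Y -> X <> [] -> Y <> [] ->
  (forall n, subgroup n -> card (prodl X Y) < n) ->
  length X + length Y - 1 <= card (prodl X Y).
Proof. intros. eapply kemp_aux; eauto. Qed.

Lemma gsum_app l1 l2 : gsum add zero (l1 ++ l2) = gsum add zero l1 * gsum add zero l2.
Proof.
  induction l1; simpl. - rewrite g_zl; auto. - rewrite IHl1, g_assoc; auto.
Qed.

Lemma firstn_in {A : Type} k (l : list A) x : In x (firstn k l) -> In x l.
Proof. intro H. rewrite <- (firstn_skipn k l). apply in_or_app. auto. Qed.
Lemma nodup_firstn {A : Type} k (l : list A) : NoDup l -> NoDup (firstn k l).
Proof. intro H. rewrite <- (firstn_skipn k l) in H. eapply NoDup_app_remove_r; eauto. Qed.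

Lemma nodup_map_eq {A B : Type} (f : A -> B) l x y :
  NoDup (map f l) -> In x l -> In y l -> f x = f y -> x = y.
Proof.
  induction l; simpl; [tauto|]. intros H Hx Hy Hf. inversion H; subst.
  destruct Hx as [<-|Hx]; destruct Hy as [<-|Hy]; auto.
  - exfalso. apply H2. rewrite Hf. apply in_map; auto.
  - exfalso. apply H2. rewrite <- Hf. apply in_map; auto.
Qed.

Lemma subgroup_pos n : subgroup n -> 1 <= n.
Proof.
  intros [H [_ [[x [Hx _]] [xs [_ [<- Hc]]]]]]. apply Hc in Hx. destruct xs; simpl in *; [tauto|lia].
Qed.

Section S.
Variable a : nat -> G.

Definition SigL idx l x := exists J, length J = l /\ NoDup J /\ incl J idx /\ x = gsum add zero (map a J).
Definition Mult idx l := forall J i, NoDup J -> incl J idx -> (forall j, In j J -> a j = a i) -> length J <= l.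
Definition Big (L : list G) k := (exists n, subgroup n /\ n <= length L) \/ k <= length L.

Lemma transversal idx : exists T, incl T idx /\ NoDup (map a T) /\
  forall i, In i idx -> exists t, In t T /\ a t = a i.
Proof.
  induction idx as [|i r IH].
  - exists []. split; [intros x H; inversion H|split; [constructor|simpl; tauto]].
  - destruct IH as [T [H1 [H2 H3]]].
    destruct (classic (exists t, In t T /\ a t = a i)) as [Hc|Hc].
    + exists T. split; [intros x Hx; right; auto|split; auto].
      intros j [<-|Hj]; auto.
    + exists (i :: T). split; [intros x [<-|Hx]; [left|right]; auto|split].
      * simpl. constructor; auto. intro Hin. apply in_map_iff in Hin.
        destruct Hin as [t [Ht1 Ht2]]. apply Hc. eauto.
      * intros j [<-|Hj]. { exists i; simpl; auto. }
        destruct (H3 j Hj) as [t [Ht Hat]]. exists t; simpl; auto.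
Qed.

Definition memn (i : nat) (I : list nat) : bool := if in_dec Nat.eq_dec i I then true else false.
Lemma memn_true i I : memn i I = true <-> In i I.
Proof. unfold memn; destruct (in_dec Nat.eq_dec i I); split; congruence || tauto. Qed.

Lemma Sthm : forall l, 1 <= l -> forall idx, NoDup idx -> l <= length idx -> Mult idx l ->
  exists L, NoDup L /\ (forall x, In x L -> SigL idx l x) /\ Big L (length idx - l + 1).
Proof.
  induction l as [|l IH]; intros Hl idx Hidx Hlen HM; [lia|].
  destruct (Nat.eq_dec l 0) as [->|Hl0].
  -
    exists (map a idx). split; [|split].
    + apply map_nodup_inj; auto. intros x y Hx Hy Hxy.
      destruct (Nat.eq_dec x y) as [|Hne]; auto. exfalso.
      assert (length [x; y] <= 1).
      { apply (HM [x; y] x).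
        - constructor; [simpl; intuition|constructor; [simpl; tauto|constructor]].
        - intros z [<-|[<-|[]]]; auto.
        - intros j [<-|[<-|[]]]; auto. }
      simpl in H. lia.
    + intros x Hx. apply in_map_iff in Hx. destruct Hx as [i [<- Hi]].
      exists [i]. split; [auto|split; [constructor; [simpl; tauto|constructor]|split]].
      * intros z [<-|[]]; auto.
      * simpl. rewrite g_zr. auto.
    + right. rewrite length_map. lia.
  -
    destruct (transversal idx) as [T [HT1 [HT2 HT3]]].
    assert (HTn : NoDup T) by (eapply NoDup_map_inv; eauto).
    assert (HT0 : 1 <= length T).
    { destruct idx as [|i0 r]; [simpl in Hlen; lia|].
      destruct (HT3 i0) as [t [Ht _]]; simpl; auto. eapply length_pos; eauto. }
    set (k := Nat.min (length T) (length idx - l)).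
    assert (Hk1 : 1 <= k) by lia.
    set (I' := firstn k T).
    assert (HI'len : length I' = k) by (unfold I'; rewrite length_firstn; lia).
    assert (HI'T : incl I' T) by (intros x Hx; eapply firstn_in; eauto).
    assert (HI'n : NoDup I') by (apply nodup_firstn; auto).
    set (rest := filter (fun i => negb (memn i I')) idx).
    assert (Hrlen : length rest = length idx - k).
    { pose proof (filter_compl (fun i => memn i I') idx) as Hc.
      assert (length (filter (fun i => memn i I') idx) = length I').
      { apply Nat.le_antisymm; apply NoDup_incl_length.
        - apply NoDup_filter; auto.
        - intros x Hx. apply filter_In in Hx. apply memn_true. tauto.
        - auto.
        - intros x Hx. apply filter_In. split; [apply HT1, HI'T; auto|apply memn_true; auto]. }
      unfold rest. lia. }
    assert (Hrn : NoDup rest) by (apply NoDup_filter; auto).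
    assert (Hrest_in : forall i, In i rest -> In i idx /\ ~ In i I').
    { intros i Hi. unfold rest in Hi. apply filter_In in Hi. destruct Hi as [Hi Hm].
      split; auto. intro Hin. apply memn_true in Hin. rewrite Hin in Hm. discriminate. }
    assert (HMr : Mult rest l).
    { intros J i HJ HJr HJc.
      destruct (le_lt_dec (length T) (length idx - l)) as [Hc|Hc].
      - destruct J as [|j0 J']; [simpl; lia|].
        destruct (Hrest_in j0 (HJr j0 (or_introl eq_refl))) as [Hj0 _].
        destruct (HT3 j0 Hj0) as [t [Ht Hat]].
        assert (HtI : In t I') by (unfold I'; rewrite firstn_all2; [auto|lia]).
        assert (length (t :: j0 :: J') <= S l).
        { apply (HM _ i).
          - constructor; auto. intro Hin. apply HJr in Hin. apply Hrest_in in Hin. tauto.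
          - intros x [<-|Hx]; [apply HT1; auto|apply Hrest_in; auto].
          - intros j [<-|Hj]; auto. rewrite Hat. apply HJc. left; auto. }
        simpl in *. lia.
      - pose proof (NoDup_incl_length HJ HJr). lia. }
    destruct (IH ltac:(lia) rest Hrn ltac:(lia) HMr) as [L1 [HL1n [HL1s HL1b]]].
    set (Y := map a I').
    assert (HYn : NoDup Y).
    { unfold Y, I'. rewrite <- firstn_map. apply nodup_firstn; auto. }
    assert (HYl : length Y = k) by (unfold Y; rewrite length_map; auto).
    assert (HY0 : exists y, In y Y).
    { destruct Y; simpl in HYl; [lia|]. exists g; simpl; auto. }
    destruct HY0 as [y0 Hy0].
    exists (nodup dec (prodl L1 Y)). split; [apply NoDup_nodup|split].
    + intros z Hz. apply nodup_In, prodl_In in Hz. destruct Hz as [x [y [Hx [Hy ->]]]].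
      destruct (HL1s x Hx) as [J [HJl [HJn [HJi ->]]]].
      unfold Y in Hy. apply in_map_iff in Hy. destruct Hy as [i [<- Hi]].
      exists (J ++ [i]). split; [rewrite length_app; simpl; lia|split; [|split]].
      * apply NoDup_app; auto. constructor; [simpl; tauto|constructor].
        intros j Hj [<-|[]]. apply HJi, Hrest_in in Hj. tauto.
      * intros j Hj. apply in_app_or in Hj. destruct Hj as [Hj|[<-|[]]].
        -- apply Hrest_in; auto.
        -- apply HT1, HI'T; auto.
      * rewrite map_app, gsum_app. simpl. rewrite g_zr. auto.
    + pose proof (card_prod_ge_l L1 Y y0 Hy0 HL1n) as HcL.
      unfold Big. change (length (nodup dec (prodl L1 Y))) with (card (prodl L1 Y)).
      destruct HL1b as [[n [Hn Hnl]]|HL1b].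
      * left. exists n. split; auto. idtac. lia.
      * destruct (classic (exists n, subgroup n /\ n <= card (prodl L1 Y))) as [Hc|Hc].
        -- left. auto.
        -- right.
           assert (HL10 : L1 <> []) by (destruct L1; simpl in *; [lia|congruence]).
           assert (HY0 : Y <> []) by (destruct Y; simpl in *; [tauto|congruence]).
           pose proof (kemp L1 Y HL1n HYn HL10 HY0) as HK.
           assert (length L1 + length Y - 1 <= card (prodl L1 Y)).
           { apply HK. intros n Hn. destruct (le_lt_dec n (card (prodl L1 Y))); auto.
             exfalso; eauto. }
           lia.
Qed.
End S.
End K.

Lemma map_const {A B : Type} (f : A -> B) c l : (forall x, In x l -> f x = c) -> map f l = repeat c (length l).
Proof. induction l; simpl; intros H; auto. rewrite H, IHl; auto. Qed.

Lemma pG_exists {G : Type} (add : G -> G -> G) (zero : G) (opp : G -> G) :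
  exists p, is_pG add zero opp p.
Proof.
  destruct (classic (exists n, has_nontriv_subgroup_of_order add zero opp n)) as [[n Hn]|Hn].
  - revert Hn. induction n as [n IHn] using (well_founded_induction lt_wf). intro Hn.
    destruct (classic (exists n', n' < n /\ has_nontriv_subgroup_of_order add zero opp n')) as [[n' [Hlt Hn']]|Hno].
    + eapply IHn; eauto.
    + exists (Some n). simpl. split; auto. intros n' Hn'.
      destruct (le_lt_dec n n'); auto. exfalso; eauto.
  - exists None. simpl. auto.
Qed.

Theorem theorem6p5 (G : Type) (add : G -> G -> G) (zero : G) (opp : G -> G)
  (hG : is_group add zero opp) (l m : nat) (a : nat -> G)
  (hl : 1 <= l) (hlm : l <= m) :
  card_ge (Sigma add zero m l a) (min_pG add zero opp (m - l + 1))
  \/ (exists i, i < m /\ Sigma add zero m l a (gmul add zero l (a i))).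
Proof.
  destruct (classic (exists J i, NoDup J /\ incl J (seq 0 m) /\ (forall j, In j J -> a j = a i) /\ l < length J))
    as [[J [i [HJ [HJi [HJc HJl]]]]]|Hc].
  - right. destruct J as [|j0 J0]; [simpl in HJl; lia|].
    assert (Hj0 : In j0 (seq 0 m)) by (apply HJi; left; auto).
    apply in_seq in Hj0.
    exists j0. split; [lia|].
    exists (firstn l (j0 :: J0)). split; [rewrite length_firstn; lia|split; [apply nodup_firstn; auto|split]].
    + intros x Hx. apply firstn_in, HJi, in_seq in Hx. lia.
    + unfold gmul. f_equal. rewrite (map_const a (a j0)).
      * rewrite length_firstn. f_equal. lia.
      * intros x Hx. apply firstn_in in Hx. rewrite (HJc x Hx). symmetry. apply HJc. left; auto.
  - left.
    assert (HM : Mult a (seq 0 m) l).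
    { intros J i HJ HJi HJc. destruct (le_lt_dec (length J) l); auto. exfalso. apply Hc. eauto 10. }
    destruct (Sthm add zero opp hG a l hl (seq 0 m) (seq_NoDup m 0) ltac:(rewrite length_seq; lia) HM)
      as [L [HLn [HLs HLb]]].
    rewrite length_seq in HLb.
    assert (Hge : min_pG add zero opp (m - l + 1) <= length L).
    { destruct HLb as [[n [Hn Hnl]]|HLb].
      - pose proof (epsilon_spec (inhabits None) (is_pG add zero opp) (pG_exists add zero opp)) as Hp.
        unfold min_pG. fold (pG add zero opp) in Hp.
        destruct (pG add zero opp) as [q|]; simpl in Hp.
        + destruct Hp as [_ Hp]. specialize (Hp n Hn). lia.
        + exfalso. apply Hp. eauto.
      - unfold min_pG. destruct (pG add zero opp); lia. }
    exists (firstn (min_pG add zero opp (m - l + 1)) L).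
    split; [apply nodup_firstn; auto|split].
    + rewrite length_firstn. lia.
    + intros x Hx. apply firstn_in in Hx. destruct (HLs x Hx) as [J [HJl [HJn [HJi ->]]]].
      exists J. repeat split; auto. intros i Hi. apply HJi, in_seq in Hi. lia.
Qed.
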